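(* Let $\mathcal{REP}$ be the category of finite-dimensional modules over $\Bbbk[x_1,x_2]$. Then $\mathrm{fpdim}(\mathcal{REP})=2$.
   Context: $\Bbbk$ is algebraically closed. For a $\Bbbk$-linear abelian category $\mathcal C$: a brick is an object $M$ with $\mathrm{Hom}_{\mathcal C}(M,M)=\Bbbk$; a brick set is a finite set $\phi=\{X_1,\dots,X_n\}$ of bricks with $\dim\mathrm{Hom}_{\mathcal C}(X_i,X_j)=\delta_{ij}$; its adjacency matrix is $C(\phi)=(\dim\mathrm{Ext}^1_{\mathcal C}(X_i,X_j))_{i,j}$; $\mathrm{fpdim}(\mathcal C)=\sup\{\rho(C(\phi)):\phi\text{ a brick set}\}$, $\rho$ the spectral radius. *)

(* Defs.v *)
From HB Require Import structures.
From mathcomp Require Import all_boot all_order all_algebra all_field.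
Set Implicit Arguments. Unset Strict Implicit. Unset Printing Implicit Defensive.
Import Order.TTheory GRing.Theory Num.Theory.
Local Open Scope ring_scope.

(* A finite-dimensional module over F[x1,x2]: the space F^n (row vectors),
   with x1, x2 acting by right multiplication by commuting matrices. *)
Record fdmod (F : fieldType) := FDMod {
  fd_dim : nat;
  act1 : 'M[F]_fd_dim;
  act2 : 'M[F]_fd_dim;
  act_comm : act1 *m act2 = act2 *m act1 }.

Section Dims.
Variable F : fieldType.
Implicit Types M N : fdmod F.

(* delta X = (A1 X - X B1, A2 X - X B2); its kernel is Hom(M,N) (a row-vector
   map v |-> v X is a module map iff A_i X = X B_i); its image is the space of
   coboundaries (trivial extensions) in the extension description of Ext^1. *)
Definition fd_delta M N (X : 'M[F]_(fd_dim M, fd_dim N)) : 'M[F]_(fd_dim M, fd_dim N + fd_dim N) :=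
  row_mx (act1 M *m X - X *m act1 N) (act2 M *m X - X *m act2 N).

(* An extension 0 -> N -> E -> M -> 0 has E = F^(n+m) with x_i acting by
   block_mx (act_i N) 0 D_i (act_i M); commutativity of these matrices is
   D1 B2 + A1 D2 = D2 B1 + A2 D1 (the cocycle condition). *)
Definition fd_cocyc M N (D : 'M[F]_(fd_dim M, fd_dim N + fd_dim N)) : 'M[F]_(fd_dim M, fd_dim N) :=
  (lsubmx D *m act2 N + act1 M *m rsubmx D) - (rsubmx D *m act1 N + act2 M *m lsubmx D).

Definition dimHom M N : nat :=
  (fd_dim M * fd_dim N - \rank (lin_mx (@fd_delta M N)))%N.

(* dim_k Ext^1(M,N) = dim (cocycles) - dim (coboundaries) *)
Definition dimExt1 M N : nat :=
  ((fd_dim M * (fd_dim N + fd_dim N) - \rank (lin_mx (@fd_cocyc M N)))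
    - \rank (lin_mx (@fd_delta M N)))%N.

Definition is_brick M : Prop := dimHom M M = 1%N.

Definition is_brick_set k (X : 'I_k -> fdmod F) : Prop :=
  (forall i, is_brick (X i)) /\
  (forall i j, dimHom (X i) (X j) = (i == j : nat)).

Definition adjacency k (X : 'I_k -> fdmod F) : 'M[algC]_k :=
  \matrix_(i, j) (dimExt1 (X i) (X j))%:R.
End Dims.

Definition is_spectral_radius n (A : 'M[algC]_n) (r : algC) : Prop :=
  (forall l, eigenvalue A l -> `|l| <= r) /\
  (if n is 0 then r = 0 else exists2 l, eigenvalue A l & `|l| = r).

Definition fpdim_REP_is (F : fieldType) (v : algC) : Prop :=
  (forall k (X : 'I_k -> fdmod F) r, is_brick_set X ->
      is_spectral_radius (adjacency X) r -> r <= v) /\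
  (forall e : algC, 0 < e -> exists k (X : 'I_k -> fdmod F) r,
      [/\ is_brick_set X, is_spectral_radius (adjacency X) r & v - e < r]).

(* Main.v *)
Require Import Defs.
From HB Require Import structures.
From mathcomp Require Import all_boot all_order all_algebra all_field.
Set Implicit Arguments. Unset Strict Implicit. Unset Printing Implicit Defensive.
Import Order.TTheory GRing.Theory Num.Theory.
Local Open Scope ring_scope.

Section S.
Variable F : fieldType.

Lemma mul_vec_linP m1 n1 m2 n2 (f : 'M[F]_(m1,n1) -> 'M[F]_(m2,n2)) (lf : linear f) A :
  mxvec A *m lin_mx f = mxvec (f A).
Proof.
pose fL : {linear _ -> _} := HB.pack f (GRing.isLinear.Build _ _ _ _ f lf).
exact: (mul_vec_lin fL A).
Qed.

Lemma lin_mx0 m1 n1 m2 n2 (f : 'M[F]_(m1,n1) -> 'M[F]_(m2,n2)) :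
  (forall X, f X = 0) -> lin_mx f = 0.
Proof. by move=> H; apply/matrixP=> i j; rewrite /lin_mx /lin1_mx !mxE /= H linear0 mxE. Qed.

Lemma comm_lin m p (A : 'M[F]_(m,m)) (B : 'M[F]_(p,p)) :
  linear (fun X : 'M[F]_(m,p) => A *m X - X *m B).
Proof.
move=> a u v; rewrite mulmxDr mulmxDl -scalemxAr -scalemxAl scalerBr.
by rewrite opprD addrACA.
Qed.

Lemma delta_lin (M N : fdmod F) : linear (@fd_delta F M N).
Proof.
move=> a u v; rewrite /fd_delta (comm_lin (act1 M) (act1 N)) (comm_lin (act2 M) (act2 N)).
by rewrite scale_row_mx add_row_mx.
Qed.

Lemma acomb (R : pzRingType) (V : lmodType R) (a : R) (x1 x2 x3 x4 y1 y2 y3 y4 : V) :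
  (a*:x1 + y1) + (a*:x2 + y2) - ((a*:x3+y3) + (a*:x4+y4)) = a*:(x1+x2-(x3+x4)) + (y1+y2-(y3+y4)).
Proof.
rewrite scalerBr !scalerDr !opprD.
by rewrite (addrACA (a*:x1) y1 (a*:x2) y2) (addrACA (- (a*:x3))) (addrACA (a*:x1 + a*:x2)).
Qed.

Lemma cocyc_lin (M N : fdmod F) : linear (@fd_cocyc F M N).
Proof.
move=> a u v; rewrite /fd_cocyc !linearP /=.
rewrite !mulmxDl -!scalemxAl; exact: acomb.
Qed.


Lemma brick_dim1 (M : fdmod F) : is_brick M -> fd_dim M = 1%N.
Proof.
case: M => -[|[|k]] A1 A2 H; rewrite /is_brick /dimHom /= //.
set L := lin_mx _ => Hb; exfalso.
have HL X : mxvec X *m L = mxvec (@fd_delta F (FDMod H) (FDMod H) X).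
  exact: (mul_vec_linP (@delta_lin (FDMod H) (FDMod H)) X).
have HK : \rank (kermx L) = 1%N by rewrite mxrank_ker.
pose u := mxvec (1%:M : 'M[F]_k.+2).
have uK : (u <= kermx L)%MS.
  by apply/sub_kermxP; rewrite HL /fd_delta /= !mulmx1 !mul1mx !subrr row_mx0 linear0.
have u0 : u != 0 by rewrite mxvec_eq0 -(mxrank_eq0) mxrank1.
have ru : \rank u = 1%N.
  by apply/eqP; rewrite eqn_leq rank_leq_row lt0n mxrank_eq0 u0.
have Ku : (kermx L <= u)%MS.
  by rewrite -(mxrank_leqif_sup uK) HK ru.
have scal X : @fd_delta F (FDMod H) (FDMod H) X = 0 -> exists c, X = c%:M.
  move=> HX; have : (mxvec X <= u)%MS.
    by apply: submx_trans Ku; apply/sub_kermxP; rewrite HL HX linear0.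
  case/submxP=> D HD; exists (D 0 0).
  apply: (can_inj mxvecK); rewrite HD {1}(mx11_scalar D) mul_scalar_mx.
  by rewrite /u -linearZ /= scalemx1.
have [c1 E1] : exists c, A1 = c%:M.
  by apply: scal; rewrite /fd_delta /= H !subrr row_mx0.
have [c2 E2] : exists c, A2 = c%:M.
  by apply: scal; rewrite /fd_delta /= H !subrr row_mx0.
have [c Ec] : exists c, (delta_mx 0 1 : 'M[F]_k.+2) = c%:M.
  by apply: scal; rewrite /fd_delta /= E1 E2 !scalar_mxC !subrr row_mx0.
have := congr1 (fun A : 'M[F]_k.+2 => A 0 0) Ec; have := congr1 (fun A : 'M[F]_k.+2 => A 0 1) Ec.
by rewrite !mxE /= mulr0n => /eqP; rewrite oner_eq0.
Qed.

Lemma rank_lin_gt0 m1 n1 m2 n2 (f : 'M[F]_(m1,n1) -> 'M[F]_(m2,n2)) (lf : linear f) X :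
  f X != 0 -> (0 < \rank (lin_mx f))%N.
Proof.
move=> fX; rewrite lt0n mxrank_eq0; apply: contra fX => /eqP L0.
by rewrite -mxvec_eq0 -(mul_vec_linP lf) L0 mulmx0.
Qed.

Section Dim1.
Variables (A1 A2 B1 B2 : 'M[F]_1) (HA : A1 *m A2 = A2 *m A1) (HB : B1 *m B2 = B2 *m B1).

Lemma ext_self : dimExt1 (FDMod HA) (FDMod HA) = 2%N.
Proof.
rewrite /dimExt1 !lin_mx0 ?mxrank0 // => X.
  rewrite /fd_delta /= (mx11_scalar A1) (mx11_scalar A2) !scalar_mxC.
  by rewrite -(@row_mx0 _ 1%N 1%N 1%N); congr row_mx; apply: subrr.
rewrite /fd_cocyc /= (mx11_scalar A1) (mx11_scalar A2) !scalar_mxC.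
by apply/eqP; rewrite subr_eq0 addrC.
Qed.

Lemma hom_self : dimHom (FDMod HA) (FDMod HA) = 1%N.
Proof.
rewrite /dimHom lin_mx0 ?mxrank0 // => X.
rewrite /fd_delta /= (mx11_scalar A1) (mx11_scalar A2) !scalar_mxC.
by rewrite -(@row_mx0 _ 1%N 1%N 1%N); congr row_mx; apply: subrr.
Qed.

Lemma cocyc_entry (d1 d2 : 'M[F]_1) :
  @fd_cocyc F (FDMod HA) (FDMod HB) (row_mx d1 d2) 0 0 =
  d1 0 0 * B2 0 0 + A1 0 0 * d2 0 0 - (d2 0 0 * B1 0 0 + A2 0 0 * d1 0 0).
Proof. by rewrite /fd_cocyc /= row_mxKl row_mxKr !mxE !big_ord1. Qed.

Lemma ext_other : dimHom (FDMod HA) (FDMod HB) = 0%N -> dimExt1 (FDMod HA) (FDMod HB) = 0%N.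
Proof.
rewrite /dimHom /dimExt1 /= => Hh.
set rd := \rank _ in Hh *.
have rd1 : (0 < rd)%N.
  by rewrite lt0n; apply/eqP => r0; move: Hh; rewrite r0.
have neq : (A1 0 0 != B1 0 0) || (A2 0 0 != B2 0 0).
  apply/negPn/negP => /norP[/negPn/eqP e1 /negPn/eqP e2].
  move: rd1; rewrite /rd lin_mx0 ?mxrank0 // => X.
  rewrite /fd_delta /= (mx11_scalar A1) (mx11_scalar A2) (mx11_scalar B1) (mx11_scalar B2).
  by rewrite e1 e2 !scalar_mxC -(@row_mx0 _ 1%N 1%N 1%N); congr row_mx; apply: subrr.
have [D cD] : exists D, @fd_cocyc F (FDMod HA) (FDMod HB) D != 0.
  case/orP: neq => ne.
    exists (row_mx 0 1%:M); apply: contra ne => /eqP /(congr1 (fun M : 'M[F]_1 => M 0 0)).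
    rewrite cocyc_entry !mxE /= mulr1n !mul0r !mulr0 !mulr1 !mul1r addr0 add0r => /eqP.
    by rewrite subr_eq0.
  exists (row_mx 1%:M 0); apply: contra ne => /eqP /(congr1 (fun M : 'M[F]_1 => M 0 0)).
  rewrite cocyc_entry !mxE /= mulr1n !mul0r !mulr0 !mulr1 !mul1r addr0 add0r => /eqP.
  by rewrite subr_eq0 eq_sym.
have rc1 := rank_lin_gt0 (@cocyc_lin (FDMod HA) (FDMod HB)) cD.
clear Hh neq cD; move: rc1 rd1; set rc := \rank _; move: rc rd => rc rd.
by case: rc => [|[|rc]] //; case: rd.
Qed.
End Dim1.

End S.

Lemma eig2 k (l : algC) : eigenvalue (2%:M : 'M[algC]_k) l -> l = 2.
Proof.
case/eigenvalueP => v; rewrite mul_mx_scalar => /eqP; rewrite -subr_eq0 -scalerBl.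
by rewrite scaler_eq0 subr_eq0 => /orP[/eqP -> //|->].
Qed.

Lemma adj2 (F : fieldType) k (X : 'I_k -> fdmod F) : is_brick_set X -> adjacency X = 2%:M.
Proof.
move=> [Hb Hbs]; apply/matrixP => i j; rewrite !mxE.
have key : dimExt1 (X i) (X j) = (2 * (i == j))%N.
  case: eqP => [<-|/eqP nij].
    case E1: (X i) (Hb i) => [n1 A1 A2 HA] Hi.
    have n1e := brick_dim1 Hi; simpl in n1e; subst n1.
    by rewrite ext_self.
  have := Hbs i j; rewrite (negbTE nij) /= muln0.
  move: (Hb i) (Hb j).
  case: (X i) => [n1 A1 A2 HA] Hi; case: (X j) => [n2 B1 B2 HB] Hj.
  have n1e := brick_dim1 Hi; have n2e := brick_dim1 Hj; simpl in n1e, n2e.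
  subst n1 n2; exact: ext_other.
by rewrite key; case: (i == j).
Qed.


Theorem theorem7p4 (F : closedFieldType) : fpdim_REP_is F 2.
Proof.
split.
  move=> k X r HX [_ Hr]; move: Hr; rewrite (adj2 HX).
  case: k {X HX} => [->|k [l /eig2 -> <-]]; first by rewrite ler0n.
  by rewrite ger0_norm ?ler0n.
move=> e e0.
pose M : fdmod F := @FDMod F 1%N 0 0 erefl.
have HX : is_brick_set (fun _ : 'I_1 => M).
  by split => [i|i j]; rewrite /is_brick ?ord1 ?eqxx; apply: hom_self.
exists 1%N, (fun _ => M), 2; split => //; last by rewrite gtrBl.
rewrite (adj2 HX); split; first by move=> l /eig2 ->; rewrite ger0_norm ?ler0n.
exists 2; last by rewrite ger0_norm ?ler0n. apply/eigenvalueP; exists (const_mx 1); first by rewrite mul_mx_scalar.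
by apply/eqP => /matrixP /(_ 0 0); rewrite !mxE; apply/eqP; rewrite oner_eq0.
Qed.
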